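(* Let $n\in\mathbb Z_{>0}$ and let $B$ be a (closed, filled) convex $n$-sided polygon in $D$ with vertices $A_1,\ldots,A_n$ in counterclockwise order; set $A_{n+1}=A_1$. For $1\leq i\leq n$ let $u_i,v_i\in S^1$ be the intersections of the line $A_iA_{i+1}$ with $S^1$, with $u_i$ closer to $A_i$ than to $A_{i+1}$; set $u_{n+1}=u_1$. Then for $1\leq i\leq n$: (1) if $v\in arc[u_i,u_{i+1})$, then $\psi_B(v)=\psi_{A_{i+1}}(v)$; (2) if $v\in arc(u_i,u_{i+1})$, then $\psi_B'(v)=\dfrac{|A_{i+1}\psi_{A_{i+1}}(v)|}{|vA_{i+1}|}$; (3) $\psi_{B+}'(u_i)=\dfrac{|A_{i+1}\psi_{A_{i+1}}(u_i)|}{|u_iA_{i+1}|}$ and $\psi_{B-}'(u_i)=\dfrac{|A_i\psi_{A_i}(u_i)|}{|u_iA_i|}$.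
   Context: $D$ is the open unit disk in $\mathbb R^2$, $S^1$ its boundary circle identified with $\mathbb R/\mathbb Z$ via the counterclockwise normalized angle, $\pi:\mathbb R\to S^1$ the projection. For a closed convex $U\subset D$ and $v\in S^1$, $\psi_U(v)$ is the point $w\in S^1\setminus\{v\}$ such that the line $vw$ meets $U$ and $U$ lies in the closed half-plane to the left of the directed line from $v$ to $w$; for a point $P\in D$, $\psi_P(v)$ is the second intersection point of the line $vP$ with $S^1$. For a homeomorphism $g$ of $S^1$ with lift $\overline g$ ($\overline g(0)\in[0,1)$) and $x\in S^1$, $g'(x)$, $g'_+(x)$, $g'_-(x)$ denote $\overline g'(u)$, the right derivative $\overline g'_+(u)$, the left derivative $\overline g'_-(u)$ for $u\in\pi^{-1}(x)$. $|XY|$ is Euclidean distance. For $w_1,w_2\in S^1$, $arc[w_1,w_2)$ is the counterclockwise arc from $w_1$ to $w_2$ including $w_1$ and excluding $w_2$; $arc(w_1,w_2)$ excludes both endpoints. *)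

(* Defs.v *)
From Stdlib Require Import Reals Lra ClassicalEpsilon.
From Coquelicot Require Import Coquelicot.
Open Scope R_scope.

Definition pt := (R * R)%type.
Definition vsub (a b : pt) : pt := (fst a - fst b, snd a - snd b).
Definition cross (a b : pt) : R := fst a * snd b - snd a * fst b.
Definition dotp (a b : pt) : R := fst a * fst b + snd a * snd b.
Definition edist (P Q : pt) : R := sqrt ((fst P - fst Q) ^ 2 + (snd P - snd Q) ^ 2).

Definition in_D (P : pt) : Prop := fst P ^ 2 + snd P ^ 2 < 1.
Definition on_S1 (P : pt) : Prop := fst P ^ 2 + snd P ^ 2 = 1.

(** The projection pi : R -> S^1 = R/Z, via the counterclockwise normalized angle. *)
Definition piS1 (t : R) : pt := (cos (2 * PI * t), sin (2 * PI * t)).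

Definition left_closed (v w P : pt) : Prop := cross (vsub w v) (vsub P v) >= 0.
Definition on_line (v w P : pt) : Prop := cross (vsub w v) (vsub P v) = 0.

Definition psi_rel (U : pt -> Prop) (v w : pt) : Prop :=
  on_S1 w /\ w <> v /\ (exists P, U P /\ on_line v w P) /\
  (forall P, U P -> left_closed v w P).
Definition psiU (U : pt -> Prop) (v : pt) : pt :=
  epsilon (inhabits ((0, 0) : pt)) (fun w => psi_rel U v w).

(** psi_P(v) for a point P ∈ D, v ∈ S^1: the second intersection of the line vP with S^1,
    namely v + s (P - v) with s = -2 <v, P - v> / |P - v|^2. *)
Definition psi_pt (P v : pt) : pt :=
  let d := vsub P v in
  let s := - 2 * dotp v d / dotp d d in
  (fst v + s * fst d, snd v + s * snd d).

Definition is_lift (g : pt -> pt) (gbar : R -> R) : Prop :=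
  continuity gbar /\ 0 <= gbar 0 < 1 /\ (forall t, piS1 (gbar t) = g (piS1 t)).

Definition is_right_derive (f : R -> R) (x l : R) : Prop :=
  filterlim (fun h => (f (x + h) - f x) / h) (at_right 0) (locally l).
Definition is_left_derive (f : R -> R) (x l : R) : Prop :=
  filterlim (fun h => (f (x + h) - f x) / h) (at_left 0) (locally l).

Definition arc_co (w1 w2 v : pt) : Prop :=
  exists a b t, piS1 a = w1 /\ piS1 b = w2 /\ a < b <= a + 1 /\
                piS1 t = v /\ a <= t < b.
Definition arc_oo (w1 w2 v : pt) : Prop :=
  exists a b t, piS1 a = w1 /\ piS1 b = w2 /\ a < b <= a + 1 /\
                piS1 t = v /\ a < t < b.

(** Polygon data: vertices A 0, ..., A (n-1) (0-based), cyclic successor index. *)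
Definition nxt (n i : nat) : nat := ((S i) mod n)%nat.

Definition convex_ccw (n : nat) (A : nat -> pt) : Prop :=
  forall i j, (i < n)%nat -> (j < n)%nat -> j <> i -> j <> nxt n i ->
    cross (vsub (A (nxt n i)) (A i)) (vsub (A j) (A i)) > 0.

Definition polygon (n : nat) (A : nat -> pt) (P : pt) : Prop :=
  exists lam : nat -> R,
    (forall j, (j < n)%nat -> 0 <= lam j) /\
    sum_f_R0 lam (n - 1) = 1 /\
    P = (sum_f_R0 (fun j => lam j * fst (A j)) (n - 1),
         sum_f_R0 (fun j => lam j * snd (A j)) (n - 1)).

Definition is_u (n : nat) (A : nat -> pt) (i : nat) (w : pt) : Prop :=
  on_S1 w /\ on_line (A i) (A (nxt n i)) w /\ edist w (A i) < edist w (A (nxt n i)).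

(* Main.v *)
Require Import Defs.
From Stdlib Require Import Reals Lra Lia Psatz ClassicalEpsilon FunctionalExtensionality Nsatz.
From Coquelicot Require Import Coquelicot.
Open Scope R_scope.

Ltac unf := unfold psi_pt, edist, left_closed, on_line, on_S1, in_D in *; unfold dotp, vsub, cross in *; cbn [fst snd] in *.

Lemma dot_lt1 (v P : pt) : on_S1 v -> in_D P -> dotp v P < 1.
Proof. destruct v as [a b]; destruct P as [x y]; unf; intros.
  pose proof (pow2_ge_0 (a-x)); pose proof (pow2_ge_0 (b-y)). nra. Qed.

Lemma dd_pos (v P : pt) : on_S1 v -> in_D P -> dotp (vsub P v) (vsub P v) > 0.
Proof. intros H1 H2. pose proof (dot_lt1 v P H1 H2).
 destruct v as [a b]; destruct P as [x y]; unf.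
 destruct (Req_dec x a); destruct (Req_dec y b); subst.
 - lra.
 - assert (0 < (y-b)*(y-b)) by (apply Rsqr_pos_lt; lra). nra.
 - assert (0 < (x-a)*(x-a)) by (apply Rsqr_pos_lt; lra). nra.
 - assert (0 < (x-a)*(x-a)) by (apply Rsqr_pos_lt; lra). nra. Qed.

Lemma psi_pt_S1 (P v : pt) : on_S1 v -> in_D P -> on_S1 (psi_pt P v).
Proof.
  intros Hv HP. pose proof (dd_pos v P Hv HP) as Hd.
  destruct v as [a b]; destruct P as [x y]; unf.
  set (D := (x - a) * (x - a) + (y - b) * (y - b)) in *.
  set (s := -2 * (a * (x - a) + b * (y - b)) / D).
  assert (Hs : s * D = -2 * (a * (x - a) + b * (y - b))) by (unfold s; field; lra).
  replace ((a + s * (x - a)) ^ 2 + (b + s * (y - b)) ^ 2) with (a^2+b^2 + s * (2 * (a * (x - a) + b * (y - b)) + s * D)) by (unfold D; ring).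
  rewrite Hs. lra.
Qed.

Lemma sum_affine (lam x y : nat -> R) (al be ga : R) m :
  sum_f_R0 (fun j => lam j * (al * x j + be * y j + ga)) m =
  al * sum_f_R0 (fun j => lam j * x j) m + be * sum_f_R0 (fun j => lam j * y j) m + ga * sum_f_R0 lam m.
Proof. induction m; simpl; [ring | rewrite IHm; ring]. Qed.

Lemma sum_nonneg_comb (lam c : nat -> R) m :
  (forall j, (j <= m)%nat -> 0 <= lam j /\ 0 <= c j) -> 0 <= sum_f_R0 (fun j => lam j * c j) m.
Proof. induction m; intros H; simpl.
 - destruct (H 0%nat) as [H1 H2]; [lia|]. nra.
 - assert (0 <= sum_f_R0 (fun j => lam j * c j) m) by (apply IHm; intros; apply H; lia).
   destruct (H (S m)) as [H1 H2]; [lia|]. nra.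
Qed.

Lemma sum_nonneg (lam : nat -> R) m :
  (forall j, (j <= m)%nat -> 0 <= lam j) -> 0 <= sum_f_R0 lam m.
Proof. induction m; intros H; simpl.
 - apply H; lia.
 - assert (0 <= sum_f_R0 lam m) by (apply IHm; intros; apply H; lia). pose proof (H (S m)). assert (0 <= lam (S m)) by (apply H; lia). lra.
Qed.

Lemma sum_pos_comb (lam c : nat -> R) m :
  (forall j, (j <= m)%nat -> 0 <= lam j /\ 0 < c j) -> 0 < sum_f_R0 lam m -> 0 < sum_f_R0 (fun j => lam j * c j) m.
Proof. induction m; intros H Hs; simpl in *.
 - destruct (H 0%nat) as [H1 H2]; [lia|]. nra.
 - destruct (H (S m)) as [H1 H2]; [lia|].
   destruct (Rlt_or_le 0 (sum_f_R0 lam m)) as [Hp|Hp].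
   + assert (0 < sum_f_R0 (fun j => lam j * c j) m) by (apply IHm; auto; intros; apply H; lia). nra.
   + assert (0 <= sum_f_R0 (fun j => lam j * c j) m).
     { apply sum_nonneg_comb. intros j Hj. destruct (H j) as [? ?]; [lia|]. split; lra. }
     assert (0 < lam (S m)) by lra. nra.
Qed.

Lemma poly_affine_ge (n : nat) (A : nat -> pt) (al be ga : R) (Q : pt) :
  (1 <= n)%nat ->
  (forall j, (j < n)%nat -> 0 <= al * fst (A j) + be * snd (A j) + ga) ->
  polygon n A Q -> 0 <= al * fst Q + be * snd Q + ga.
Proof.
  intros Hn H [lam [H1 [H2 H3]]]. subst Q. cbn [fst snd].
  rewrite <- (Rmult_1_r ga), <- H2, <- sum_affine.
  apply sum_nonneg_comb. intros j Hj. split; [apply H1; lia| apply H; lia].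
Qed.

Lemma poly_affine_gt (n : nat) (A : nat -> pt) (al be ga : R) (Q : pt) :
  (1 <= n)%nat ->
  (forall j, (j < n)%nat -> 0 < al * fst (A j) + be * snd (A j) + ga) ->
  polygon n A Q -> 0 < al * fst Q + be * snd Q + ga.
Proof.
  intros Hn H [lam [H1 [H2 H3]]]. subst Q. cbn [fst snd].
  rewrite <- (Rmult_1_r ga), <- H2, <- sum_affine.
  apply sum_pos_comb; [|lra]. intros j Hj. split; [apply H1; lia| apply H; lia].
Qed.

Lemma sum_ind_zero (k : nat) (f : nat -> R) m : (m < k)%nat ->
  sum_f_R0 (fun j => (if Nat.eq_dec j k then 1 else 0) * f j) m = 0.
Proof. induction m; intros H; cbn [sum_f_R0].
 - destruct (Nat.eq_dec 0 k); [lia|ring].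
 - rewrite IHm by lia. destruct (Nat.eq_dec (S m) k); [lia|ring]. Qed.

Lemma sum_ind (k : nat) (f : nat -> R) m : (k <= m)%nat ->
  sum_f_R0 (fun j => (if Nat.eq_dec j k then 1 else 0) * f j) m = f k.
Proof. induction m; intros H; cbn [sum_f_R0].
 - destruct (Nat.eq_dec 0 k); [subst; ring|lia].
 - destruct (Nat.eq_dec (S m) k).
   + subst. rewrite sum_ind_zero by lia. ring.
   + rewrite IHm by lia. ring. Qed.

Lemma vertex_in_poly (n : nat) (A : nat -> pt) k : (k < n)%nat -> polygon n A (A k).
Proof.
  intros Hk. exists (fun j => if Nat.eq_dec j k then 1 else 0). split; [|split].
  - intros j _. destruct (Nat.eq_dec j k); lra.
  - rewrite (sum_eq _ (fun j => (if Nat.eq_dec j k then 1 else 0) * 1)).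
    + apply (sum_ind k (fun _ => 1)); lia.
    + intros. ring.
  - rewrite !sum_ind by lia. destruct (A k); reflexivity.
Qed.

Definition psc (P v : pt) : R := -2 * dotp v (vsub P v) / dotp (vsub P v) (vsub P v).

Lemma psi_pt_eq (P v : pt) : psi_pt P v = (fst v + psc P v * (fst P - fst v), snd v + psc P v * (snd P - snd v)).
Proof. reflexivity. Qed.

Lemma psc_gt1 (P v : pt) : on_S1 v -> in_D P -> psc P v > 1.
Proof. intros Hv HP. pose proof (dd_pos v P Hv HP) as Hd. unfold psc.
  apply Rlt_gt. apply (Rmult_lt_reg_r (dotp (vsub P v) (vsub P v))); [lra|].
  unfold Rdiv. rewrite Rmult_assoc, Rinv_l by lra.
  destruct v as [a b]; destruct P as [x y]; unf. nra. Qed.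

Lemma cross_affine (d v Q : pt) : cross d (vsub Q v) =
  (- snd d) * fst Q + fst d * snd Q + (snd d * fst v - fst d * snd v).
Proof. unf. ring. Qed.

Lemma psi_rel_vertex (n : nat) (A : nat -> pt) (v : pt) (k : nat) :
  (1 <= n)%nat -> (forall j, (j < n)%nat -> in_D (A j)) -> on_S1 v -> (k < n)%nat ->
  (forall j, (j < n)%nat -> cross (vsub (A k) v) (vsub (A j) v) >= 0) ->
  psi_rel (polygon n A) v (psi_pt (A k) v).
Proof.
  intros Hn HD Hv Hk Hc. pose proof (HD k Hk) as HP.
  pose proof (psc_gt1 _ _ Hv HP) as Hs. pose proof (dd_pos _ _ Hv HP) as Hd.
  assert (Ew : vsub (psi_pt (A k) v) v = (psc (A k) v * fst (vsub (A k) v), psc (A k) v * snd (vsub (A k) v))).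
  { rewrite psi_pt_eq. unfold vsub. cbn [fst snd]. f_equal; ring. }
  split; [apply psi_pt_S1; auto|]. split; [|split].
  - intro E. assert (E2 : vsub (psi_pt (A k) v) v = (0,0)) by (rewrite E; unfold vsub; f_equal; ring).
    rewrite Ew in E2. injection E2 as E3 E4.
    destruct (Rmult_integral _ _ E3); [lra|]. destruct (Rmult_integral _ _ E4); [lra|].
    unfold dotp, vsub in Hd; cbn [fst snd] in Hd. rewrite H, H0 in Hd. lra.
  - exists (A k). split; [apply vertex_in_poly; auto|]. unfold on_line. rewrite Ew. unfold cross. cbn [fst snd]. ring.
  - intros Q HQ. unfold left_closed. rewrite Ew, cross_affine. apply Rle_ge.
    apply (poly_affine_ge n A); auto. intros j Hj.
    rewrite <- cross_affine. pose proof (Hc j Hj). unfold cross in *. cbn [fst snd] in *. nra.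
Qed.

Lemma poly_dot_lt1 (n : nat) (A : nat -> pt) (v Q : pt) :
  (1 <= n)%nat -> (forall j, (j < n)%nat -> in_D (A j)) -> on_S1 v -> polygon n A Q -> dotp v Q < 1.
Proof. intros Hn HD Hv HQ.
  assert (0 < (- fst v) * fst Q + (- snd v) * snd Q + 1).
  { apply (poly_affine_gt n A); auto. intros j Hj. pose proof (dot_lt1 _ _ Hv (HD j Hj)). unfold dotp in H. lra. }
  unfold dotp. lra. Qed.

Lemma uniq_core (a b d11 d12 d21 d22 e11 e12 e21 e22 : R) :
  a^2 + b^2 = 1 -> (a + d11)^2 + (b + d12)^2 = 1 -> (a + d21)^2 + (b + d22)^2 = 1 ->
  d11^2 + d12^2 > 0 -> d21^2 + d22^2 > 0 ->
  d11 * e12 - d12 * e11 = 0 -> d21 * e22 - d22 * e21 = 0 ->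
  d11 * e22 - d12 * e21 >= 0 -> d21 * e12 - d22 * e11 >= 0 ->
  a * e11 + b * e12 < 0 -> a * e21 + b * e22 < 0 ->
  d21 = d11 /\ d22 = d12.
Proof.
  intros H0 Hc1 Hc2 Hn1 Hn2 Hl1 Hl2 Hx1 Hx2 He1 He2.
  assert (V1 : a * d11 + b * d12 = - (d11^2 + d12^2) / 2) by nra.
  assert (V2 : a * d21 + b * d22 = - (d21^2 + d22^2) / 2) by nra.
  set (cr := d21 * d12 - d22 * d11).
  assert (I1 : (a * d11 + b * d12) * (d21 * e12 - d22 * e11) =
     (a * d21 + b * d22) * (d11 * e12 - d12 * e11) + (a * e11 + b * e12) * cr) by (unfold cr; ring).
  assert (I2 : (a * d21 + b * d22) * (d11 * e22 - d12 * e21) =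
     (a * d11 + b * d12) * (d21 * e22 - d22 * e21) + (a * e21 + b * e22) * (- cr)) by (unfold cr; ring).
  rewrite Hl1 in I1. rewrite Hl2 in I2.
  assert (cr >= 0).
  { destruct (Rlt_or_le cr 0); [|lra]. exfalso.
    assert ((a * e11 + b * e12) * cr > 0) by nra.
    assert ((a * d11 + b * d12) * (d21 * e12 - d22 * e11) <= 0). { rewrite V1. nra. }
    lra. }
  assert (cr <= 0).
  { destruct (Rlt_or_le 0 cr); [|lra]. exfalso.
    assert ((a * e21 + b * e22) * (- cr) > 0) by nra.
    assert ((a * d21 + b * d22) * (d11 * e22 - d12 * e21) <= 0). { rewrite V2. nra. }
    lra. }
  assert (Hcr : cr = 0) by lra. unfold cr in Hcr.
  set (N1 := d11^2 + d12^2) in *.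
  set (c := (d11 * d21 + d12 * d22) / N1).
  assert (F1 : d21 * N1 = (d11 * d21 + d12 * d22) * d11).
  { unfold N1. transitivity ((d11 * d21 + d12 * d22) * d11 + d12 * (d21 * d12 - d22 * d11)); [ring|rewrite Hcr; ring]. }
  assert (F2 : d22 * N1 = (d11 * d21 + d12 * d22) * d12).
  { unfold N1. transitivity ((d11 * d21 + d12 * d22) * d12 - d11 * (d21 * d12 - d22 * d11)); [ring|rewrite Hcr; ring]. }
  assert (E1 : d21 = c * d11) by (unfold c; apply (Rmult_eq_reg_r N1); [|lra]; rewrite F1; field; lra).
  assert (E2 : d22 = c * d12) by (unfold c; apply (Rmult_eq_reg_r N1); [|lra]; rewrite F2; field; lra).
  rewrite E1, E2 in V2. 
  assert (Hcc : c * (c - 1) * N1 = 0).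
  { replace (c * (c - 1) * N1) with (2 * (a * (c * d11) + b * (c * d12)) + ((c * d11) ^ 2 + (c * d12) ^ 2) - 2 * c * (a * d11 + b * d12) - c * N1) by (unfold N1; ring).
    rewrite V2, V1. field. }
  destruct (Rmult_integral _ _ Hcc) as [H2|H2]; [|lra].
  destruct (Rmult_integral _ _ H2) as [H3|H3].
  - rewrite H3 in E1, E2. subst. nra.
  - split; [rewrite E1 | rewrite E2]; replace c with 1 by lra; ring.
Qed.

Lemma neq_sq (x y a b : R) : (x, y) <> (a, b) -> (x - a)^2 + (y - b)^2 > 0.
Proof. intros H. destruct (Req_dec x a); destruct (Req_dec y b); subst.
 - exfalso; auto.
 - assert (0 < (y-b)*(y-b)) by (apply Rsqr_pos_lt; lra). nra.
 - assert (0 < (x-a)*(x-a)) by (apply Rsqr_pos_lt; lra). nra.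
 - assert (0 < (x-a)*(x-a)) by (apply Rsqr_pos_lt; lra). nra. Qed.

Lemma psi_rel_unique (n : nat) (A : nat -> pt) (v w1 w2 : pt) :
  (1 <= n)%nat -> (forall j, (j < n)%nat -> in_D (A j)) -> on_S1 v ->
  psi_rel (polygon n A) v w1 -> psi_rel (polygon n A) v w2 -> w1 = w2.
Proof.
  intros Hn HD Hv [S1 [ne1 [[Q1 [HQ1 Hl1]] Hall1]]] [S2 [ne2 [[Q2 [HQ2 Hl2]] Hall2]]].
  pose proof (poly_dot_lt1 n A v Q1 Hn HD Hv HQ1) as HE1.
  pose proof (poly_dot_lt1 n A v Q2 Hn HD Hv HQ2) as HE2.
  pose proof (Hall1 Q2 HQ2) as Hx1. pose proof (Hall2 Q1 HQ1) as Hx2.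
  destruct v as [a b]; destruct w1 as [p1 p2]; destruct w2 as [q1 q2];
  destruct Q1 as [x1 y1]; destruct Q2 as [x2 y2].
  pose proof (neq_sq _ _ _ _ ne1). pose proof (neq_sq _ _ _ _ ne2). unf.
  destruct (uniq_core a b (p1 - a) (p2 - b) (q1 - a) (q2 - b) (x1 - a) (y1 - b) (x2 - a) (y2 - b))
    as [E1 E2]; try nra.
  - replace (a + (p1 - a)) with p1 by ring. replace (b + (p2 - b)) with p2 by ring. auto.
  - replace (a + (q1 - a)) with q1 by ring. replace (b + (q2 - b)) with q2 by ring. auto.
  - f_equal; lra.
Qed.

Lemma psiU_eq (n : nat) (A : nat -> pt) (v w : pt) :
  (1 <= n)%nat -> (forall j, (j < n)%nat -> in_D (A j)) -> on_S1 v ->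
  psi_rel (polygon n A) v w -> psiU (polygon n A) v = w.
Proof.
  intros Hn HD Hv Hw. unfold psiU.
  pose proof (epsilon_spec (inhabits ((0,0):pt)) (fun w => psi_rel (polygon n A) v w) (ex_intro _ w Hw)) as H.
  cbv beta in H. eapply psi_rel_unique; eauto.
Qed.


Definition rr (P v : pt) : R := cross v P / (1 - dotp v P).
Definition Fk (P : pt) (t : R) : R := t + / 2 - atan (rr P (piS1 t)) / PI.

Lemma piS1_on_S1 t : on_S1 (piS1 t).
Proof. unfold piS1, on_S1; cbn [fst snd]. pose proof (sin2_cos2 (2 * PI * t)). unfold Rsqr in H. nra. Qed.

Lemma piS1_F (P : pt) (t : R) : in_D P -> piS1 (Fk P t) = psi_pt P (piS1 t).
Proof.
  intros HP. pose proof (piS1_on_S1 t) as Hv. pose proof (dot_lt1 _ _ Hv HP) as Hq.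
  pose proof (dd_pos _ _ Hv HP) as HD.
  unfold Fk. set (r := rr P (piS1 t)).
  assert (HA : 2 * PI * (t + / 2 - atan r / PI) = 2 * PI * t + (PI - 2 * atan r))  by (field; apply PI_neq0).
  assert (Hsa : sin (atan r) = r * cos (atan r)).
  { rewrite sin_atan, cos_atan. assert (0 < sqrt (1 + r²)) by (apply sqrt_lt_R0; pose proof (Rle_0_sqr r); lra). field; lra. }
  assert (Hsc : (sin (atan r))^2 + (cos (atan r))^2 = 1) by (pose proof (sin2_cos2 (atan r)); unfold Rsqr in H; lra).
  assert (Er : r * (1 - dotp (piS1 t) P) = cross (piS1 t) P) by (unfold r, rr; field; lra).
  assert (Eq : (1 - dotp (piS1 t) P) * / (1 - dotp (piS1 t) P) = 1) by (field; lra).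
  assert (ED : dotp (vsub P (piS1 t)) (vsub P (piS1 t)) * / dotp (vsub P (piS1 t)) (vsub P (piS1 t)) = 1) by (field; lra).
  unfold piS1 at 1. rewrite HA, cos_plus, sin_plus, cos_minus, sin_minus, cos_PI, sin_PI, cos_2a_sin, sin_2a.
  rewrite psi_pt_eq. unfold psc. unfold Rdiv.
  set (qi := / (1 - dotp (piS1 t) P)) in *.
  set (Di := / dotp (vsub P (piS1 t)) (vsub P (piS1 t))) in *.
  set (sa := sin (atan r)) in *. set (ca := cos (atan r)) in *. clearbody r sa ca qi Di.
  pose proof Hv as Hv'. unfold piS1 in *. set (C := cos (2 * PI * t)) in *. set (S := sin (2 * PI * t)) in *.
  clearbody C S. destruct P as [p1 p2]. unf. simpl in *.
  f_equal; nsatz.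
Qed.

Lemma cross_rr (v Pk Pj : pt) : on_S1 v -> in_D Pk -> in_D Pj ->
  cross (vsub Pk v) (vsub Pj v) = (1 - dotp v Pk) * (1 - dotp v Pj) * (rr Pk v - rr Pj v).
Proof. intros Hv Hk Hj. pose proof (dot_lt1 _ _ Hv Hk). pose proof (dot_lt1 _ _ Hv Hj).
  assert (E1 : rr Pk v * (1 - dotp v Pk) = cross v Pk) by (unfold rr; field; lra).
  assert (E2 : rr Pj v * (1 - dotp v Pj) = cross v Pj) by (unfold rr; field; lra).
  replace ((1 - dotp v Pk) * (1 - dotp v Pj) * (rr Pk v - rr Pj v)) with
    ((1 - dotp v Pj) * (rr Pk v * (1 - dotp v Pk)) - (1 - dotp v Pk) * (rr Pj v * (1 - dotp v Pj))) by ring.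
  rewrite E1, E2. clear E1 E2.
  destruct v as [a b]; destruct Pk as [x1 y1]; destruct Pj as [x2 y2]. unf. simpl in *. clear - Hv. nsatz.
Qed.

Fixpoint maxr (f : nat -> R) (m : nat) : R :=
  match m with O => f O | S m' => Rmax (maxr f m') (f (S m')) end.

Lemma maxr_ge (f : nat -> R) m j : (j <= m)%nat -> f j <= maxr f m.
Proof. induction m; intros H; simpl.
 - replace j with 0%nat by lia. lra.
 - destruct (Nat.eq_dec j (S m)). + subst. apply Rmax_r.
   + eapply Rle_trans; [apply IHm; lia| apply Rmax_l]. Qed.

Lemma maxr_att (f : nat -> R) m : exists j, (j <= m)%nat /\ maxr f m = f j.
Proof. induction m; simpl.
 - exists 0%nat; split; auto.
 - destruct IHm as [j [Hj E]]. unfold Rmax. destruct (Rle_dec (maxr f m) (f (S m))).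
   + exists (S m); split; auto.
   + exists j; split; auto. Qed.

Lemma maxr_eq (f : nat -> R) m k : (k <= m)%nat -> (forall j, (j <= m)%nat -> f j <= f k) -> maxr f m = f k.
Proof. intros Hk H. destruct (maxr_att f m) as [j [Hj E]]. pose proof (maxr_ge f m k Hk). pose proof (H j Hj). lra. Qed.

Definition Mv (n : nat) (A : nat -> pt) (v : pt) : R := maxr (fun j => rr (A j) v) (n - 1).

Lemma psiU_max (n : nat) (A : nat -> pt) (v : pt) (k : nat) :
  (1 <= n)%nat -> (forall j, (j < n)%nat -> in_D (A j)) -> on_S1 v -> (k < n)%nat ->
  (forall j, (j < n)%nat -> rr (A j) v <= rr (A k) v) ->
  psiU (polygon n A) v = psi_pt (A k) v.
Proof. intros Hn HD Hv Hk H. apply psiU_eq; auto. apply psi_rel_vertex; auto.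
  intros j Hj. rewrite cross_rr; auto. pose proof (dot_lt1 _ _ Hv (HD k Hk)). pose proof (dot_lt1 _ _ Hv (HD j Hj)).
  pose proof (H j Hj). apply Rle_ge. apply Rmult_le_pos; [apply Rmult_le_pos|]; lra. Qed.

Lemma rr_le_of_cross (v Pk Pj : pt) : on_S1 v -> in_D Pk -> in_D Pj ->
  cross (vsub Pk v) (vsub Pj v) >= 0 -> rr Pj v <= rr Pk v.
Proof. intros Hv Hk Hj H. rewrite cross_rr in H; auto. pose proof (dot_lt1 _ _ Hv Hk). pose proof (dot_lt1 _ _ Hv Hj).
  assert (0 < (1 - dotp v Pk) * (1 - dotp v Pj)) by (apply Rmult_lt_0_compat; lra).
  destruct (Rle_dec (rr Pj v) (rr Pk v)); auto. exfalso.
  assert (rr Pk v - rr Pj v < 0) by lra. nra. Qed.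

Lemma rr_piS1 (P : pt) t : rr P (piS1 t) =
  (cos (2 * PI * t) * snd P - sin (2 * PI * t) * fst P) / (1 - (cos (2 * PI * t) * fst P + sin (2 * PI * t) * snd P)).
Proof. reflexivity. Qed.

Lemma rr_ex_derive (P : pt) t : in_D P -> ex_derive (fun s => rr P (piS1 s)) t.
Proof. intros HP. pose proof (dot_lt1 _ _ (piS1_on_S1 t) HP) as H. unfold dotp, piS1 in H; cbn [fst snd] in H.
  apply (ex_derive_ext (fun s => (cos (2 * PI * s) * snd P - sin (2 * PI * s) * fst P) / (1 - (cos (2 * PI * s) * fst P + sin (2 * PI * s) * snd P)))).
  { intros; symmetry; apply rr_piS1. }
  auto_derive. lra.
Qed.

Lemma rr_cont (P : pt) t : in_D P -> continuous (fun s => rr P (piS1 s)) t.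
Proof. intros; apply (@ex_derive_continuous R_AbsRing R_NormedModule), rr_ex_derive; auto. Qed.

Lemma Rmax_abs a b : Rmax a b = (a + b + Rabs (a - b)) / 2.
Proof. unfold Rmax, Rabs. destruct (Rle_dec a b); destruct (Rcase_abs (a - b)); lra. Qed.

Lemma maxr_cont (f : nat -> R -> R) m t : (forall j, (j <= m)%nat -> continuous (f j) t) ->
  continuous (fun s => maxr (fun j => f j s) m) t.
Proof. induction m; intros H; simpl.
 - apply H; lia.
 - apply (continuous_ext (fun s => (maxr (fun j => f j s) m + f (S m) s + Rabs (maxr (fun j => f j s) m - f (S m) s)) / 2)).
   { intros; symmetry; apply Rmax_abs. }
   assert (C1 : continuous (fun s => maxr (fun j => f j s) m) t) by (apply IHm; intros; apply H; lia).
   assert (C2 : continuous (f (S m)) t) by (apply H; lia).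
   apply (continuous_scal_l (fun s => (maxr (fun j => f j s) m + f (S m) s + Rabs (maxr (fun j => f j s) m - f (S m) s))) (/2)).
   apply (continuous_plus (fun s => maxr (fun j => f j s) m + f (S m) s)).
   + apply (continuous_plus (fun s => maxr (fun j => f j s) m)); auto.
   + apply continuous_Rabs_comp. apply (continuous_minus (fun s => maxr (fun j => f j s) m)); auto.
Qed.

Definition Lf (n : nat) (A : nat -> pt) (t : R) : R := t + / 2 - atan (Mv n A (piS1 t)) / PI.

Lemma Mv_cont n A t : (forall j, (j < n)%nat -> in_D (A j)) -> (1 <= n)%nat ->
  continuous (fun s => Mv n A (piS1 s)) t.
Proof. intros HD Hn. unfold Mv. apply (maxr_cont (fun j s => rr (A j) (piS1 s))).
  intros j Hj. apply rr_cont, HD. lia. Qed.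

Lemma atanPI_cont (g : R -> R) t : continuous g t -> continuous (fun s => s + / 2 - atan (g s) / PI) t.
Proof. intros Hg.
  apply (continuous_minus (fun s => s + / 2) (fun s => atan (g s) / PI)).
  - apply (continuous_plus (fun s => s) (fun _ => / 2)); [apply continuous_id| apply continuous_const].
  - apply (continuous_mult (fun s => atan (g s)) (fun _ => / PI)); [apply continuous_atan_comp; auto | apply continuous_const].
Qed.

Lemma Lf_cont n A : (forall j, (j < n)%nat -> in_D (A j)) -> (1 <= n)%nat -> continuity (Lf n A).
Proof. intros HD Hn x. apply continuity_pt_filterlim. unfold Lf. apply atanPI_cont, Mv_cont; auto. Qed.

Lemma Lf_is_Fk n A t : (forall j, (j < n)%nat -> in_D (A j)) -> (1 <= n)%nat ->
  exists k, (k < n)%nat /\ Lf n A t = Fk (A k) t /\ (forall j, (j < n)%nat -> rr (A j) (piS1 t) <= rr (A k) (piS1 t)).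
Proof. intros HD Hn. destruct (maxr_att (fun j => rr (A j) (piS1 t)) (n - 1)) as [k [Hk E]].
  exists k. split; [lia|]. split.
  - unfold Lf, Fk, Mv. rewrite E. reflexivity.
  - intros j Hj. rewrite <- E. apply (maxr_ge (fun j => rr (A j) (piS1 t))). lia.
Qed.

Lemma Lf_lift n A : (forall j, (j < n)%nat -> in_D (A j)) -> (1 <= n)%nat -> is_lift (psiU (polygon n A)) (Lf n A).
Proof. intros HD Hn. split; [apply Lf_cont; auto|]. split.
  - unfold Lf. pose proof (atan_bound (Mv n A (piS1 0))) as [H1 H2]. pose proof PI_RGT_0.
    assert (- / 2 < atan (Mv n A (piS1 0)) / PI < / 2).
    { split; [apply (Rmult_lt_reg_r PI); [lra|]; field_simplify; lra | apply (Rmult_lt_reg_r PI); [lra|]; field_simplify; lra]. }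
    lra.
  - intros t. destruct (Lf_is_Fk n A t HD Hn) as [k [Hk [E Hm]]]. rewrite E, piS1_F by (apply HD; auto).
    symmetry. apply psiU_max; auto. apply piS1_on_S1.
Qed.

Lemma cos2pi_one (x : R) : -1 < x < 1 -> cos (2 * PI * x) = 1 -> x = 0.
Proof. intros Hx Hc. pose proof PI_RGT_0.
  replace (2 * PI * x) with (2 * (PI * x)) in Hc by ring. rewrite cos_2a_sin in Hc.
  assert (Hs : sin (PI * x) = 0) by nra.
  destruct (Rtotal_order x 0) as [H1|[H1|H1]]; auto; exfalso.
  - assert (0 < sin (PI * - x)) by (apply sin_gt_0; nra).
    replace (PI * - x) with (- (PI * x)) in H0 by ring. rewrite sin_neg in H0. lra.
  - assert (0 < sin (PI * x)) by (apply sin_gt_0; nra). lra.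
Qed.

Lemma lift_unique (g : pt -> pt) (L1 L2 : R -> R) : is_lift g L1 -> is_lift g L2 -> forall t, L1 t = L2 t.
Proof.
  intros [C1 [B1 E1]] [C2 [B2 E2]].
  assert (Hc : forall t, cos (2 * PI * (L1 t - L2 t)) = 1).
  { intros t. pose proof (E1 t) as e1. rewrite <- (E2 t) in e1. unfold piS1 in e1. injection e1 as ec es.
    replace (2 * PI * (L1 t - L2 t)) with (2 * PI * L1 t - 2 * PI * L2 t) by ring.
    rewrite cos_minus, ec, es. pose proof (sin2_cos2 (2 * PI * L2 t)). unfold Rsqr in H. lra. }
  assert (Cd : continuity (fun t => L1 t - L2 t)) by (intro x; apply continuity_pt_minus; auto).
  assert (H0 : L1 0 - L2 0 = 0) by (apply cos2pi_one; [lra | apply Hc]).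
  intros t. apply Rminus_diag_uniq.
  destruct (Rlt_or_le (Rabs (L1 t - L2 t)) 1) as [Hlt|Hge].
  - apply cos2pi_one; [apply Rabs_def2 in Hlt; lra | apply Hc].
  - exfalso. destruct (Rle_or_lt 0 (L1 t - L2 t)) as [Hp|Hn].
    + rewrite Rabs_right in Hge by lra.
      destruct (IVT_gen (fun t => L1 t - L2 t) 0 t (/ 2) Cd) as [x [_ Hx]].
      { cbv beta. rewrite H0. unfold Rmin, Rmax. destruct (Rle_dec 0 (L1 t - L2 t)); lra. }
      pose proof (cos2pi_one (/ 2) ltac:(lra)). rewrite <- Hx in H. specialize (H (Hc x)). lra.
    + rewrite Rabs_left in Hge by lra.
      destruct (IVT_gen (fun t => L1 t - L2 t) 0 t (- / 2) Cd) as [x [_ Hx]].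
      { cbv beta. rewrite H0. unfold Rmin, Rmax. destruct (Rle_dec 0 (L1 t - L2 t)); lra. }
      pose proof (cos2pi_one (- / 2) ltac:(lra)). rewrite <- Hx in H. specialize (H (Hc x)). lra.
Qed.
Lemma Fk_derive (P : pt) t : fst P ^ 2 + snd P ^ 2 < 1 -> 
  is_derive (Fk P) t ((1 - (fst P ^ 2 + snd P ^ 2)) / ((fst P - cos (2 * PI * t)) ^ 2 + (snd P - sin (2 * PI * t)) ^ 2)).
Proof. intros HP. destruct P as [p1 p2]; cbn [fst snd] in *.
  apply (is_derive_ext (fun s => s + / 2 - atan ((cos (2 * PI * s) * p2 - sin (2 * PI * s) * p1) / (1 - (cos (2 * PI * s) * p1 + sin (2 * PI * s) * p2))) / PI)).
  { intros; reflexivity. }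
  pose proof (sin2_cos2 (2 * PI * t)) as HCS. unfold Rsqr in HCS. pose proof PI_neq0 as HPI.
  set (C := cos (2 * PI * t)) in *. set (S := sin (2 * PI * t)) in *.
  assert (Hq : C * p1 + S * p2 < 1) by (pose proof (Rle_0_sqr (C-p1)); pose proof (Rle_0_sqr (S-p2)); unfold Rsqr in *; simpl in HP; nra).
  assert (HqcD : (1 - (C * p1 + S * p2))^2 + (C * p2 - S * p1)^2 = (p1 - C) ^ 2 + (p2 - S) ^ 2) by (clear - HCS; simpl; nsatz).
  assert (HD : (p1 - C) ^ 2 + (p2 - S) ^ 2 > 0) by (rewrite <- HqcD; pose proof (pow2_ge_0 (C * p2 - S * p1)); assert (0 < (1 - (C * p1 + S * p2))^2) by (apply pow_lt; lra); lra).
  auto_derive; [fold C S; lra|]. fold C S. 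
  field_simplify_eq.
  - clear - HCS. simpl in *. nsatz.
  - repeat split; try lra.
    all: match goal with |- ?e <> 0 => replace e with ((p1 - C) ^ 2 + (p2 - S) ^ 2) by (rewrite <- HqcD; ring) end; lra.
Qed.

Lemma ratio_eq (P v : pt) : on_S1 v -> in_D P ->
  edist P (psi_pt P v) / edist v P = (1 - (fst P ^ 2 + snd P ^ 2)) / ((fst P - fst v) ^ 2 + (snd P - snd v) ^ 2).
Proof. intros Hv HP. pose proof (psc_gt1 P v Hv HP) as Hs. pose proof (dd_pos v P Hv HP) as HD.
  rewrite psi_pt_eq. unfold edist. cbn [fst snd].
  set (s := psc P v) in *.
  assert (Es : s * dotp (vsub P v) (vsub P v) = -2 * dotp v (vsub P v)) by (unfold s, psc; field; lra).
  destruct v as [a b]; destruct P as [x y]. unfold dotp, vsub in *; cbn [fst snd] in *. unfold on_S1 in Hv; cbn [fst snd] in Hv.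
  set (D := (x - a) * (x - a) + (y - b) * (y - b)) in *.
  replace ((x - (a + s * (x - a))) ^ 2 + (y - (b + s * (y - b))) ^ 2) with ((s - 1) ^ 2 * D) by (unfold D; ring).
  replace ((a - x) ^ 2 + (b - y) ^ 2) with D by (unfold D; ring).
  replace ((x - a) ^ 2 + (y - b) ^ 2) with D by (unfold D; ring).
  rewrite sqrt_mult by (try apply pow2_ge_0; lra). rewrite sqrt_pow2 by lra.
  assert (0 < sqrt D) by (apply sqrt_lt_R0; lra).
  transitivity (s - 1); [field; lra|].
  apply (Rmult_eq_reg_r D); [|lra]. unfold Rdiv. rewrite Rmult_assoc, Rinv_l, Rmult_1_r by lra.
  rewrite Rmult_minus_distr_r, Es. unfold D. simpl in *. nra.
Qed.

Definition prv (n k : nat) : nat := match k with O => (n - 1)%nat | S k' => k' end.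

Lemma nxt_lt n k : (k < n)%nat -> (nxt n k < n)%nat.
Proof. intros. unfold nxt. apply Nat.mod_upper_bound. lia. Qed.

Lemma nxt_S n k : (S k < n)%nat -> nxt n k = S k.
Proof. intros. unfold nxt. apply Nat.mod_small. auto. Qed.

Lemma nxt_last n k : S k = n -> nxt n k = 0%nat.
Proof. intros. unfold nxt. rewrite H. apply Nat.Div0.mod_same. Qed.

Lemma nxt_prv n k : (k < n)%nat -> nxt n (prv n k) = k.
Proof. intros. destruct k; simpl.
 - apply nxt_last. lia.
 - apply nxt_S. lia. Qed.

Lemma prv_lt n k : (k < n)%nat -> (prv n k < n)%nat.
Proof. intros; destruct k; simpl; lia. Qed.

Lemma nxt_cases n k : (k < n)%nat -> (S k < n /\ nxt n k = S k)%nat \/ (S k = n /\ nxt n k = 0)%nat.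
Proof. intros. destruct (Nat.eq_dec (S k) n). - right; split; auto; apply nxt_last; auto. - left; split; [lia| apply nxt_S; lia]. Qed.

Lemma cone (n : nat) (A : nat -> pt) (k : nat) (v : pt) :
  (3 <= n)%nat -> convex_ccw n A -> (k < n)%nat ->
  cross (vsub (A k) v) (vsub (A (prv n k)) (A k)) >= 0 ->
  cross (vsub (A k) v) (vsub (A (nxt n k)) (A k)) >= 0 ->
  forall j, (j < n)%nat -> cross (vsub (A k) v) (vsub (A j) v) >= 0.
Proof.
  intros Hn Hc Hk HG HH j Hj.
  set (p := prv n k) in *. set (q := nxt n k) in *.
  assert (Hp : (p < n)%nat) by (apply prv_lt; auto). assert (Hq : (q < n)%nat) by (apply nxt_lt; auto).
  assert (Hpk : nxt n p = k) by (apply nxt_prv; auto).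
  assert (Npk : p <> k) by (unfold p; destruct k; simpl; lia).
  assert (Nqk : q <> k) by (unfold q; destruct (nxt_cases n k Hk) as [[? E]|[? E]]; rewrite E; lia).
  assert (Nqp : q <> p).
  { unfold q, p. destruct (nxt_cases n k Hk) as [[? E]|[? E]]; rewrite E; destruct k; simpl; lia. }
  assert (Hab : cross (vsub (A k) (A p)) (vsub (A q) (A p)) > 0) by (rewrite <- Hpk at 1; apply Hc; auto; congruence).
  assert (Hqb : cross (vsub (A q) (A k)) (vsub (A j) (A k)) >= 0).
  { destruct (Nat.eq_dec j k) as [e|e]; [rewrite e; unf; lra|]. destruct (Nat.eq_dec j q) as [e'|e']; [rewrite e'; unf; lra|].
    apply Rle_ge, Rlt_le, Hc; auto. }
  assert (Haq : cross (vsub (A k) (A p)) (vsub (A j) (A p)) >= 0).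
  { destruct (Nat.eq_dec j k) as [e|e]; [rewrite e; unf; lra|]. destruct (Nat.eq_dec j p) as [e'|e']; [rewrite e'; unf; lra|].
    rewrite <- Hpk at 1. apply Rle_ge, Rlt_le, Hc; auto. congruence. }
  clearbody p q. clear - Hab Hqb Haq HG HH.
  destruct (A k) as [x0 y0]; destruct (A p) as [x1 y1]; destruct (A q) as [x2 y2]; destruct (A j) as [x3 y3];
  destruct v as [a b]. unf.
  set (cab := (x0 - x1) * (y2 - y1) - (y0 - y1) * (x2 - x1)) in *.
  assert (I : cab * ((x0 - a) * (y3 - b) - (y0 - b) * (x3 - a)) =
     ((x2 - x0) * (y3 - y0) - (y2 - y0) * (x3 - x0)) * ((x0 - a) * (y1 - y0) - (y0 - b) * (x1 - x0)) +
     ((x0 - x1) * (y3 - y1) - (y0 - y1) * (x3 - x1)) * ((x0 - a) * (y2 - y0) - (y0 - b) * (x2 - x0))) by (unfold cab; ring).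
  assert (0 <= cab * ((x0 - a) * (y3 - b) - (y0 - b) * (x3 - a))) by (rewrite I; apply Rplus_le_le_0_compat; apply Rmult_le_pos; lra).
  apply Rle_ge. destruct (Rle_lt_dec 0 ((x0 - a) * (y3 - b) - (y0 - b) * (x3 - a))); auto. nra.
Qed.

Lemma hp_lemma (x e1 e2 e : pt) : dotp x e1 < 0 -> dotp x e2 < 0 -> dotp x e < 0 ->
  cross e2 e1 < 0 -> cross e1 e < 0 -> cross e2 e < 0.
Proof. intros H1 H2 H3 H4 H5.
  assert (I : dotp x e1 * cross e2 e = dotp x e2 * cross e1 e + dotp x e * cross e2 e1) by (unf; ring).
  assert (0 < dotp x e1 * cross e2 e) by (rewrite I; nra). nra. Qed.

Lemma hp_lemma' (x e1 e2 e : pt) : dotp x e1 < 0 -> dotp x e2 < 0 -> dotp x e < 0 ->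
  cross e2 e1 > 0 -> cross e1 e > 0 -> cross e2 e > 0.
Proof. intros H1 H2 H3 H4 H5.
  assert (I : dotp x e1 * cross e2 e = dotp x e2 * cross e1 e + dotp x e * cross e2 e1) by (unf; ring).
  assert (dotp x e1 * cross e2 e < 0) by (rewrite I; nra). nra. Qed.

Lemma dot_chord (x y z : pt) : on_S1 x -> on_S1 y -> cross (vsub y x) z <> 0 -> dotp x (vsub y x) < 0.
Proof. intros Hx Hy Hc. destruct x as [a b]; destruct y as [c d]; destruct z as [e f]. unf.
  assert (E : a * (c - a) + b * (d - b) = - ((c - a)^2 + (d - b)^2) / 2) by (simpl in *; nra).
  rewrite E. destruct (Req_dec c a); destruct (Req_dec d b).
  - exfalso. apply Hc. subst. ring.
  - assert (0 < (d-b)*(d-b)) by (apply Rsqr_pos_lt; lra). nra.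
  - assert (0 < (c-a)*(c-a)) by (apply Rsqr_pos_lt; lra). nra.
  - assert (0 < (c-a)*(c-a)) by (apply Rsqr_pos_lt; lra). nra.
Qed.

Lemma cross_piS1 (a p r : R) :
  cross (vsub (piS1 (a + p)) (piS1 a)) (vsub (piS1 (a + r)) (piS1 a)) =
  -4 * sin (PI * p) * sin (PI * r) * sin (PI * (p - r)).
Proof.
  unfold piS1, cross, vsub; cbn [fst snd].
  replace (2 * PI * (a + p)) with (2 * PI * a + 2 * (PI * p)) by ring.
  replace (2 * PI * (a + r)) with (2 * PI * a + 2 * (PI * r)) by ring.
  replace (PI * (p - r)) with (PI * p - PI * r) by ring.
  rewrite !cos_plus, !sin_plus, !cos_2a_sin, !sin_2a, sin_minus.
  pose proof (sin2_cos2 (2 * PI * a)) as HA. pose proof (sin2_cos2 (PI * p)) as HP. pose proof (sin2_cos2 (PI * r)) as HR.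
  unfold Rsqr in *.
  set (cA := cos (2 * PI * a)) in *. set (sA := sin (2 * PI * a)) in *.
  set (cp := cos (PI * p)) in *. set (sp := sin (PI * p)) in *.
  set (cr := cos (PI * r)) in *. set (sr := sin (PI * r)) in *.
  clearbody cA sA cp sp cr sr. nsatz.
Qed.

Lemma diff_piS1 (c : pt) (t h : R) :
  cross c (vsub (piS1 (t + h)) (piS1 t)) = 2 * sin (PI * h) * dotp c (piS1 (t + h / 2)).
Proof.
  unfold piS1, cross, vsub, dotp; cbn [fst snd].
  replace (2 * PI * (t + h)) with (2 * PI * (t + h / 2) + PI * h) by field.
  replace (2 * PI * t) with (2 * PI * (t + h / 2) - PI * h) by field.
  rewrite cos_plus, sin_plus, cos_minus, sin_minus. ring.
Qed.

Lemma sin_pos01 (x : R) : 0 < x < 1 -> 0 < sin (PI * x).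
Proof. intros. pose proof PI_RGT_0. apply sin_gt_0; nra. Qed.

Lemma sin_neg01 (x : R) : -1 < x < 0 -> sin (PI * x) < 0.
Proof. intros. pose proof (sin_pos01 (- x) ltac:(lra)). replace (PI * - x) with (- (PI * x)) in H0 by ring.
  rewrite sin_neg in H0. lra. Qed.

Lemma piS1_periodic (a : R) : piS1 (a + 1) = piS1 a.
Proof. unfold piS1. replace (2 * PI * (a + 1)) with (2 * PI * a + 2 * PI) by ring.
  rewrite cos_plus, sin_plus, cos_2PI, sin_2PI. f_equal; ring. Qed.

Lemma arc_C1C2 (a b t : R) : a < t < b -> b < a + 1 ->
  cross (vsub (piS1 b) (piS1 a)) (vsub (piS1 t) (piS1 a)) < 0 /\
  cross (vsub (piS1 a) (piS1 b)) (vsub (piS1 t) (piS1 b)) > 0.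
Proof. intros Ht Hb. split.
  - pose proof (cross_piS1 a (b - a) (t - a)) as E. replace (a + (b - a)) with b in E by ring.
    replace (a + (t - a)) with t in E by ring. rewrite E.
    pose proof (sin_pos01 (b - a) ltac:(lra)). pose proof (sin_pos01 (t - a) ltac:(lra)).
    pose proof (sin_pos01 (b - a - (t - a)) ltac:(lra)). 
    assert (0 < sin (PI * (b - a)) * sin (PI * (t - a)) * sin (PI * (b - a - (t - a)))) by (repeat apply Rmult_lt_0_compat; auto).
    nra.
  - pose proof (cross_piS1 b (a - b) (t - b)) as E. replace (b + (a - b)) with a in E by ring.
    replace (b + (t - b)) with t in E by ring. rewrite E.
    pose proof (sin_neg01 (a - b) ltac:(lra)). pose proof (sin_neg01 (t - b) ltac:(lra)).
    pose proof (sin_neg01 (a - b - (t - b)) ltac:(lra)).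
    assert (0 < sin (PI * (a - b)) * sin (PI * (t - b))) by nra. nra.
Qed.

Lemma u_param (P Q w : pt) : in_D P -> in_D Q -> on_S1 w -> cross (vsub Q P) (vsub w P) = 0 ->
  edist w P < edist w Q ->
  exists s, s < 0 /\ w = (fst P + s * (fst Q - fst P), snd P + s * (snd Q - snd P)) /\ dotp w (vsub Q P) < 0.
Proof.
  intros HP HQ Hw Hc Hd. unfold edist in Hd. apply sqrt_lt_0_alt in Hd.
  destruct P as [x y]; destruct Q as [x' y']; destruct w as [a b]. unf.
  set (e1 := x' - x) in *. set (e2 := y' - y) in *.
  assert (HE : e1 * e1 + e2 * e2 > 0).
  { destruct (Req_dec e1 0); destruct (Req_dec e2 0).
    - exfalso. assert (x' = x) by (unfold e1 in *; lra). assert (y' = y) by (unfold e2 in *; lra). subst. lra.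
    - assert (0 < e2*e2) by (apply Rsqr_pos_lt; lra). nra.
    - assert (0 < e1*e1) by (apply Rsqr_pos_lt; lra). nra.
    - assert (0 < e1*e1) by (apply Rsqr_pos_lt; lra). nra. }
  set (E := e1 * e1 + e2 * e2) in *.
  set (s := ((a - x) * e1 + (b - y) * e2) / E).
  assert (Ea : a = x + s * e1).
  { apply (Rmult_eq_reg_r E); [|lra]. unfold s. field_simplify; [|lra].
    transitivity (x * E + ((a - x) * e1 + (b - y) * e2) * e1 - e2 * (e1 * (b - y) - e2 * (a - x))).
    - unfold E; ring.
    - rewrite Hc. unfold E. field; lra. }
  assert (Eb : b = y + s * e2).
  { apply (Rmult_eq_reg_r E); [|lra]. unfold s. field_simplify; [|lra].
    transitivity (y * E + ((a - x) * e1 + (b - y) * e2) * e2 + e1 * (e1 * (b - y) - e2 * (a - x))).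
    - unfold E; ring.
    - rewrite Hc. unfold E. field; lra. }
  clearbody s. subst a b.
  assert (Hs12 : s < / 2).
  { assert (Hx : x + s * e1 - x' = (s - 1) * e1) by (unfold e1; ring).
    assert (Hy : y + s * e2 - y' = (s - 1) * e2) by (unfold e2; ring).
    rewrite Hx, Hy in Hd. replace (x + s * e1 - x) with (s * e1) in Hd by ring.
    replace (y + s * e2 - y) with (s * e2) in Hd by ring. simpl in Hd. unfold E in *. nra. }
  assert (Hconv : (1 - s) * (x^2 + y^2) + s * (x'^2 + y'^2) - ((x + s * e1)^2 + (y + s * e2)^2) = s * (1 - s) * E)
    by (unfold E, e1, e2; ring).
  assert (Hsneg : s < 0).
  { destruct (Rlt_or_le s 0); auto. exfalso. assert (0 <= s * (1 - s) * E) by (apply Rmult_le_pos; [apply Rmult_le_pos|]; lra). nra. }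
  exists s. split; auto. split; auto.
  assert (Hf : (x^2 + y^2 - 1) = ((x + s * e1)^2 + (y + s * e2)^2 - 1) + 2 * ((x + s * e1) * e1 + (y + s * e2) * e2) * (- s) + E * s^2)
    by (unfold E; ring).
  assert (0 < E * s^2) by (apply Rmult_lt_0_compat; [lra| simpl; nra]).
  nra.
Qed.

Definition Gf (P Ap v : pt) : R := cross (vsub P v) (vsub Ap P).

Lemma GH_at_x (P Ap Aq x : pt) (s1 : R) :
  cross (vsub Ap P) (vsub Aq P) < 0 -> s1 < 0 ->
  x = (fst Ap + s1 * (fst P - fst Ap), snd Ap + s1 * (snd P - snd Ap)) ->
  Gf P Ap x = 0 /\ Gf P Aq x > 0.
Proof. intros Hab Hs Ex. subst x. unfold Gf. destruct P as [p1 p2]; destruct Ap as [a1 a2]; destruct Aq as [b1 b2]. unf.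
  split; [ring|]. 
  replace ((p1 - (a1 + s1 * (p1 - a1))) * (b2 - p2) - (p2 - (a2 + s1 * (p2 - a2))) * (b1 - p1))
    with (- (1 - s1) * ((a1 - p1) * (b2 - p2) - (a2 - p2) * (b1 - p1))) by ring.
  nra. Qed.

Lemma GH_interior (P Ap Aq x y v : pt) (s1 s2 : R) :
  cross (vsub Ap P) (vsub Aq P) < 0 -> s1 < 0 -> s2 < 0 ->
  x = (fst Ap + s1 * (fst P - fst Ap), snd Ap + s1 * (snd P - snd Ap)) ->
  y = (fst P + s2 * (fst Aq - fst P), snd P + s2 * (snd Aq - snd P)) ->
  dotp x (vsub P Ap) < 0 -> dotp y (vsub Aq P) < 0 ->
  on_S1 x -> on_S1 y -> on_S1 v ->
  cross (vsub y x) (vsub v x) < 0 -> cross (vsub x y) (vsub v y) > 0 ->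
  Gf P Ap v > 0 /\ Gf P Aq v > 0.
Proof.
  intros Hab Hs1 Hs2 Ex Ey Hdx Hdy Sx Sy Sv C1 C2. split.
  - assert (Hx1 : dotp x (vsub y x) < 0) by (apply (dot_chord x y (vsub v x)); auto; lra).
    assert (Hx2 : dotp x (vsub v x) < 0).
    { apply (dot_chord x v (vsub y x)); auto. intro E.
      assert (cross (vsub y x) (vsub v x) = - cross (vsub v x) (vsub y x)) by (unf; ring). lra. }
    assert (H21 : cross (vsub P Ap) (vsub y x) < 0).
    { rewrite Ex, Ey. destruct P as [p1 p2]; destruct Ap as [a1 a2]; destruct Aq as [b1 b2]. unf.
      replace ((p1 - a1) * (p2 + s2 * (b2 - p2) - (a2 + s1 * (p2 - a2))) - (p2 - a2) * (p1 + s2 * (b1 - p1) - (a1 + s1 * (p1 - a1))))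
        with (s2 * - ((a1 - p1) * (b2 - p2) - (a2 - p2) * (b1 - p1))) by ring. nra. }
    pose proof (hp_lemma x (vsub y x) (vsub P Ap) (vsub v x) Hx1 Hdx Hx2 H21 C1) as R.
    assert (Gf P Ap v = - cross (vsub P Ap) (vsub v x)).
    { unfold Gf. rewrite Ex. destruct P as [p1 p2]; destruct Ap as [a1 a2]; destruct v as [v1 v2]. unf. ring. }
    lra.
  - assert (Hy1 : dotp y (vsub x y) < 0) by (apply (dot_chord y x (vsub v y)); auto; lra).
    assert (Hy2 : dotp y (vsub v y) < 0).
    { apply (dot_chord y v (vsub x y)); auto. intro E.
      assert (cross (vsub x y) (vsub v y) = - cross (vsub v y) (vsub x y)) by (unf; ring). lra. }
    assert (H21 : cross (vsub Aq P) (vsub x y) > 0).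
    { rewrite Ex, Ey. destruct P as [p1 p2]; destruct Ap as [a1 a2]; destruct Aq as [b1 b2]. unf.
      replace ((b1 - p1) * (a2 + s1 * (p2 - a2) - (p2 + s2 * (b2 - p2))) - (b2 - p2) * (a1 + s1 * (p1 - a1) - (p1 + s2 * (b1 - p1))))
        with (- (1 - s1) * ((a1 - p1) * (b2 - p2) - (a2 - p2) * (b1 - p1))) by ring. nra. }
    pose proof (hp_lemma' y (vsub x y) (vsub Aq P) (vsub v y) Hy1 Hdy Hy2 H21 C2) as R.
    assert (Gf P Aq v = cross (vsub Aq P) (vsub v y)).
    { unfold Gf. rewrite Ey. destruct P as [p1 p2]; destruct Aq as [b1 b2]; destruct v as [v1 v2]. unf. ring. }
    lra.
Qed.

Lemma ball_R (x e y : R) : ball x e y <-> Rabs (y - x) < e.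
Proof. unfold ball; simpl; unfold AbsRing_ball, abs, minus, plus, opp; simpl. tauto. Qed.

Lemma pos_near (f : R -> R) t : continuous f t -> f t > 0 -> exists d, d > 0 /\ forall s, Rabs (s - t) < d -> f s > 0.
Proof. intros Hc Hp. pose (e := mkposreal (f t / 2) ltac:(lra)).
  destruct (proj1 (filterlim_locally f (f t)) Hc e) as [d Hd].
  exists d. split; [apply cond_pos|]. intros s Hs. specialize (Hd s (proj2 (ball_R t d s) Hs)).
  apply ball_R in Hd. unfold e in Hd; simpl in Hd. apply Rabs_def2 in Hd. destruct Hd. unfold minus, plus, opp in *; simpl in *. lra. Qed.

Lemma derive_near (F L : R -> R) t l : is_derive F t l ->
  (exists d, d > 0 /\ forall s, Rabs (s - t) < d -> L s = F s) -> is_derive L t l.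
Proof. intros HF [d [Hd E]]. apply (is_derive_ext_loc F); auto.
  exists (mkposreal d Hd). intros s Hs. symmetry. apply E. apply ball_R in Hs. auto. Qed.

Lemma right_derive_of (F L : R -> R) t l : is_derive F t l ->
  (exists d, d > 0 /\ forall s, t <= s < t + d -> L s = F s) -> is_right_derive L t l.
Proof. intros HF [d [Hd E]]. apply is_derive_Reals in HF.
  unfold is_right_derive. apply filterlim_locally. intros eps.
  destruct (HF eps (cond_pos eps)) as [d' Hd'].
  assert (Hm : 0 < Rmin d d') by (apply Rmin_pos; [lra| apply cond_pos]).
  exists (mkposreal _ Hm). intros h Hh Hpos. simpl in Hh. apply ball_R.
  unfold ball in Hh; simpl in Hh; unfold AbsRing_ball, abs, minus, plus, opp in Hh; simpl in Hh.
  rewrite Ropp_0, Rplus_0_r in Hh.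
  assert (Rabs h < d) by (eapply Rlt_le_trans; [apply Hh| apply Rmin_l]).
  assert (Rabs h < d') by (eapply Rlt_le_trans; [apply Hh| apply Rmin_r]).
  rewrite Rabs_right in * by lra.
  rewrite (E (t + h)) by lra. rewrite (E t) by lra.
  apply Hd'; [lra| rewrite Rabs_right; lra].
Qed.

Lemma left_derive_of (F L : R -> R) t l : is_derive F t l ->
  (exists d, d > 0 /\ forall s, t - d < s <= t -> L s = F s) -> is_left_derive L t l.
Proof. intros HF [d [Hd E]]. apply is_derive_Reals in HF.
  unfold is_left_derive. apply filterlim_locally. intros eps.
  destruct (HF eps (cond_pos eps)) as [d' Hd'].
  assert (Hm : 0 < Rmin d d') by (apply Rmin_pos; [lra| apply cond_pos]).
  exists (mkposreal _ Hm). intros h Hh Hneg. simpl in Hh. apply ball_R.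
  unfold ball in Hh; simpl in Hh; unfold AbsRing_ball, abs, minus, plus, opp in Hh; simpl in Hh.
  rewrite Ropp_0, Rplus_0_r in Hh.
  assert (Rabs h < d) by (eapply Rlt_le_trans; [apply Hh| apply Rmin_l]).
  assert (Rabs h < d') by (eapply Rlt_le_trans; [apply Hh| apply Rmin_r]).
  rewrite Rabs_left in * by lra.
  rewrite (E (t + h)) by lra. rewrite (E t) by lra.
  apply Hd'; [lra| rewrite Rabs_left; lra].
Qed.

Lemma cont_trig (al be ga t : R) : continuous (fun s => al * cos (2 * PI * s) + be * sin (2 * PI * s) + ga) t.
Proof. apply (@ex_derive_continuous R_AbsRing R_NormedModule). auto_derive. auto. Qed.

Lemma Gf_cont (P Q : pt) t : continuous (fun s => Gf P Q (piS1 s)) t.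
Proof. apply (continuous_ext (fun s => (- (snd Q - snd P)) * cos (2 * PI * s) + (fst Q - fst P) * sin (2 * PI * s) + (fst P * (snd Q - snd P) - snd P * (fst Q - fst P)))).
  - intros s. match goal with |- ?a = ?b => change (@eq R a b) end. unfold Gf, piS1. unf. ring.
  - apply cont_trig. Qed.

Lemma dot_cont (c : pt) t : continuous (fun s => dotp c (piS1 s)) t.
Proof. apply (continuous_ext (fun s => fst c * cos (2 * PI * s) + snd c * sin (2 * PI * s) + 0)).
  - intros s. match goal with |- ?a = ?b => change (@eq R a b) end. unfold dotp, piS1. cbn [fst snd]. ring.
  - apply cont_trig. Qed.

Lemma max_at (n : nat) (A : nat -> pt) (k : nat) (v : pt) :
  (3 <= n)%nat -> convex_ccw n A -> (forall j, (j < n)%nat -> in_D (A j)) -> (k < n)%nat -> on_S1 v ->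
  Gf (A k) (A (prv n k)) v >= 0 -> Gf (A k) (A (nxt n k)) v >= 0 ->
  forall j, (j < n)%nat -> rr (A j) v <= rr (A k) v.
Proof. intros Hn Hc HD Hk Hv HG HH j Hj. apply rr_le_of_cross; auto.
  apply (cone n A k v); auto. Qed.

Lemma Lf_at (n : nat) (A : nat -> pt) (k : nat) (s : R) :
  (3 <= n)%nat -> convex_ccw n A -> (forall j, (j < n)%nat -> in_D (A j)) -> (k < n)%nat ->
  Gf (A k) (A (prv n k)) (piS1 s) >= 0 -> Gf (A k) (A (nxt n k)) (piS1 s) >= 0 ->
  Lf n A s = Fk (A k) s.
Proof. intros Hn Hc HD Hk HG HH. unfold Lf, Fk, Mv.
  rewrite (maxr_eq (fun j => rr (A j) (piS1 s)) (n - 1) k); [reflexivity|lia|].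
  intros j Hj. apply (max_at n A k); auto; [apply piS1_on_S1|lia]. Qed.

Lemma psiU_at (n : nat) (A : nat -> pt) (k : nat) (v : pt) :
  (3 <= n)%nat -> convex_ccw n A -> (forall j, (j < n)%nat -> in_D (A j)) -> (k < n)%nat -> on_S1 v ->
  Gf (A k) (A (prv n k)) v >= 0 -> Gf (A k) (A (nxt n k)) v >= 0 ->
  psiU (polygon n A) v = psi_pt (A k) v.
Proof. intros. apply psiU_max; auto; [lia|]. apply (max_at n A k); auto. Qed.

Lemma prv_nxt n i : (3 <= n)%nat -> (i < n)%nat -> prv n (nxt n i) = i.
Proof. intros. destruct (nxt_cases n i H0) as [[? E]|[? E]]; rewrite E; simpl; lia. Qed.

Lemma arc_interior (P Ap Aq x y : pt) (s1 s2 a0 b0 t : R) :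
  cross (vsub Ap P) (vsub Aq P) < 0 -> s1 < 0 -> s2 < 0 ->
  x = (fst Ap + s1 * (fst P - fst Ap), snd Ap + s1 * (snd P - snd Ap)) ->
  y = (fst P + s2 * (fst Aq - fst P), snd P + s2 * (snd Aq - snd P)) ->
  dotp x (vsub P Ap) < 0 -> dotp y (vsub Aq P) < 0 ->
  on_S1 x -> on_S1 y ->
  piS1 a0 = x -> piS1 b0 = y -> a0 < b0 <= a0 + 1 -> a0 < t < b0 ->
  Gf P Ap (piS1 t) > 0 /\ Gf P Aq (piS1 t) > 0.
Proof.
  intros Hab Hs1 Hs2 Ex Ey Hdx Hdy Sx Sy Ha Hb Hab0 Ht.
  assert (Hxy : x <> y).
  { intro E. destruct (GH_at_x P Ap Aq x s1 Hab Hs1 Ex) as [_ H1].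
    assert (Gf P Aq y = 0) by (rewrite Ey; unfold Gf; destruct P; destruct Aq; unf; ring).
    rewrite E in H1. lra. }
  assert (Hb1 : b0 < a0 + 1).
  { destruct Hab0 as [_ [Hlt|Heq]]; auto. exfalso. apply Hxy. rewrite <- Ha, <- Hb, Heq. symmetry. apply piS1_periodic. }
  destruct (arc_C1C2 a0 b0 t Ht Hb1) as [C1 C2]. rewrite Ha, Hb in C1, C2.
  apply (GH_interior P Ap Aq x y (piS1 t) s1 s2); auto. apply piS1_on_S1.
Qed.

Lemma edge_data (n : nat) (A : nat -> pt) (u : nat -> pt) (i : nat) :
  (3 <= n)%nat -> (forall j, (j < n)%nat -> in_D (A j)) -> convex_ccw n A ->
  (forall j, (j < n)%nat -> is_u n A j (u j)) -> (i < n)%nat ->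
  exists s1, s1 < 0 /\ u i = (fst (A i) + s1 * (fst (A (nxt n i)) - fst (A i)), snd (A i) + s1 * (snd (A (nxt n i)) - snd (A i)))
    /\ dotp (u i) (vsub (A (nxt n i)) (A i)) < 0.
Proof. intros Hn HD Hc Hu Hi. destruct (Hu i Hi) as [S1 [Hl Hd]].
  destruct (u_param (A i) (A (nxt n i)) (u i)) as [s [Hs [E Hdot]]]; auto.
  - apply HD, nxt_lt; auto.
  - exists s; auto. Qed.

Lemma convex_abc (n : nat) (A : nat -> pt) (i : nat) :
  (3 <= n)%nat -> convex_ccw n A -> (i < n)%nat ->
  cross (vsub (A i) (A (nxt n i))) (vsub (A (nxt n (nxt n i))) (A (nxt n i))) < 0.
Proof. intros Hn Hc Hi. set (k := nxt n i). set (q := nxt n k).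
  assert (Hk : (k < n)%nat) by (apply nxt_lt; auto). assert (Hq : (q < n)%nat) by (apply nxt_lt; auto).
  assert (q <> i /\ q <> k).
  { unfold q, k. destruct (nxt_cases n i Hi) as [[? E]|[? E]]; rewrite E;
    [destruct (nxt_cases n (S i) ltac:(lia)) as [[? E2]|[? E2]]| destruct (nxt_cases n 0 ltac:(lia)) as [[? E2]|[? E2]]];
    rewrite E2; lia. }
  pose proof (Hc i q Hi Hq (proj1 H) (proj2 H)). fold k in H0.
  destruct (A i) as [a1 a2]; destruct (A k) as [b1 b2]; destruct (A q) as [c1 c2]. unf. nra. Qed.

Lemma sin_nonneg01 (h : R) : 0 <= h < 1 -> 0 <= sin (PI * h).
Proof. intros. destruct (Req_dec h 0). - subst. rewrite Rmult_0_r, sin_0. lra. - left. apply sin_pos01. lra. Qed.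

Lemma sin_nonpos01 (h : R) : -1 < h <= 0 -> sin (PI * h) <= 0.
Proof. intros. destruct (Req_dec h 0). - subst. rewrite Rmult_0_r, sin_0. lra. - left. apply sin_neg01. lra. Qed.

Lemma right_side (P Ap Aq : pt) (s1 t : R) :
  cross (vsub Ap P) (vsub Aq P) < 0 -> s1 < 0 ->
  piS1 t = (fst Ap + s1 * (fst P - fst Ap), snd Ap + s1 * (snd P - snd Ap)) ->
  dotp (piS1 t) (vsub P Ap) < 0 ->
  exists d, d > 0 /\ forall s, t <= s < t + d -> Gf P Ap (piS1 s) >= 0 /\ Gf P Aq (piS1 s) >= 0.
Proof.
  intros Hab Hs1 Ex Hdx.
  destruct (GH_at_x P Ap Aq (piS1 t) s1 Hab Hs1 Ex) as [_ H1].
  destruct (pos_near _ t (Gf_cont P Aq t) H1) as [d1 [Hd1 E1]].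
  assert (Hphi : dotp (vsub Ap P) (piS1 t) > 0) by (unf; lra).
  destruct (pos_near _ t (dot_cont (vsub Ap P) t) Hphi) as [d2 [Hd2 E2]].
  exists (Rmin (Rmin d1 d2) 1). split; [apply Rmin_pos; [apply Rmin_pos|]; lra|].
  intros s Hs. pose proof (Rmin_l (Rmin d1 d2) 1). pose proof (Rmin_r (Rmin d1 d2) 1).
  pose proof (Rmin_l d1 d2). pose proof (Rmin_r d1 d2).
  split.
  - assert (I : Gf P Ap (piS1 s) = cross (vsub Ap P) (vsub (piS1 (t + (s - t))) (piS1 t))).
    { replace (t + (s - t)) with s by ring. rewrite Ex. unfold Gf. destruct P; destruct Ap; destruct (piS1 s). unf. ring. }
    rewrite I, diff_piS1. apply Rle_ge.
    assert (0 <= sin (PI * (s - t))) by (apply sin_nonneg01; lra).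
    assert (dotp (vsub Ap P) (piS1 (t + (s - t) / 2)) > 0) by (apply E2; rewrite Rabs_right; lra).
    nra.
  - left. apply E1. rewrite Rabs_right; lra.
Qed.

Lemma left_side (P Ap Aq : pt) (s1 t : R) :
  cross (vsub Aq P) (vsub Ap P) > 0 -> s1 < 0 ->
  piS1 t = (fst P + s1 * (fst Aq - fst P), snd P + s1 * (snd Aq - snd P)) ->
  dotp (piS1 t) (vsub Aq P) < 0 ->
  exists d, d > 0 /\ forall s, t - d < s <= t -> Gf P Ap (piS1 s) >= 0 /\ Gf P Aq (piS1 s) >= 0.
Proof.
  intros Hab Hs1 Ex Hdx.
  assert (H1 : Gf P Ap (piS1 t) > 0).
  { rewrite Ex. unfold Gf. destruct P as [p1 p2]; destruct Ap as [a1 a2]; destruct Aq as [b1 b2]. unf.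
    replace ((p1 - (p1 + s1 * (b1 - p1))) * (a2 - p2) - (p2 - (p2 + s1 * (b2 - p2))) * (a1 - p1))
      with (- s1 * ((b1 - p1) * (a2 - p2) - (b2 - p2) * (a1 - p1))) by ring. nra. }
  destruct (pos_near _ t (Gf_cont P Ap t) H1) as [d1 [Hd1 E1]].
  assert (Hphi : - dotp (vsub Aq P) (piS1 t) > 0) by (unf; lra).
  destruct (pos_near (fun s => - dotp (vsub Aq P) (piS1 s)) t) as [d2 [Hd2 E2]]; auto.
  { apply (continuous_opp (fun s => dotp (vsub Aq P) (piS1 s))). apply dot_cont. }
  exists (Rmin (Rmin d1 d2) 1). split; [apply Rmin_pos; [apply Rmin_pos|]; lra|].
  intros s Hs. pose proof (Rmin_l (Rmin d1 d2) 1). pose proof (Rmin_r (Rmin d1 d2) 1).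
  pose proof (Rmin_l d1 d2). pose proof (Rmin_r d1 d2).
  split.
  - left. apply E1. destruct (Req_dec s t); [subst; rewrite Rminus_diag, Rabs_R0; lra|]. rewrite Rabs_left; lra.
  - assert (I : Gf P Aq (piS1 s) = cross (vsub Aq P) (vsub (piS1 (t + (s - t))) (piS1 t))).
    { replace (t + (s - t)) with s by ring. rewrite Ex. unfold Gf. destruct P; destruct Aq; destruct (piS1 s). unf. ring. }
    rewrite I, diff_piS1. apply Rle_ge.
    assert (sin (PI * (s - t)) <= 0) by (apply sin_nonpos01; lra).
    assert (- dotp (vsub Aq P) (piS1 (t + (s - t) / 2)) > 0).
    { apply E2. destruct (Req_dec s t); [subst; replace (t + (t - t) / 2 - t) with 0 by field; rewrite Rabs_R0; lra|].
      rewrite Rabs_left; lra. }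
    nra.
Qed.

Lemma prv_facts n i : (3 <= n)%nat -> (i < n)%nat ->
  (prv n i < n)%nat /\ prv n i <> i /\ prv n i <> nxt n i.
Proof. intros Hn Hi. split; [apply prv_lt; auto|]. destruct (nxt_cases n i Hi) as [[? E]|[? E]]; rewrite E; destruct i; simpl; lia. Qed.

Theorem proposition2p4 (n : nat) (A : nat -> pt) (u : nat -> pt) :
  (3 <= n)%nat ->
  (forall i, (i < n)%nat -> in_D (A i)) ->
  convex_ccw n A ->
  (forall i, (i < n)%nat -> is_u n A i (u i)) ->
  let B := polygon n A in
  (exists L, is_lift (psiU B) L) /\
  forall i, (i < n)%nat ->
    let Ai := A i in
    let Ai1 := A (nxt n i) in
    let ui := u i in
    let ui1 := u (nxt n i) in
    (* (1) *)
    (forall v, arc_co ui ui1 v -> psiU B v = psi_pt Ai1 v) /\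
    (* (2) *)
    (forall L, is_lift (psiU B) L ->
       forall v t, arc_oo ui ui1 v -> piS1 t = v ->
         is_derive L t (edist Ai1 (psi_pt Ai1 v) / edist v Ai1)) /\
    (* (3) *)
    (forall L, is_lift (psiU B) L ->
       forall t, piS1 t = ui ->
         is_right_derive L t (edist Ai1 (psi_pt Ai1 ui) / edist ui Ai1) /\
         is_left_derive L t (edist Ai (psi_pt Ai ui) / edist ui Ai)).
Proof.
  intros Hn HD Hc Hu. cbv zeta.
  assert (Hn1 : (1 <= n)%nat) by lia.
  split; [exists (Lf n A); apply Lf_lift; auto|].
  intros i Hi.
  set (k := nxt n i). set (q := nxt n k).
  assert (Hk : (k < n)%nat) by (apply nxt_lt; auto).
  assert (Hq : (q < n)%nat) by (apply nxt_lt; auto).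
  assert (Hpk : prv n k = i) by (apply prv_nxt; auto).
  pose proof (convex_abc n A i Hn Hc Hi) as Hab. fold k q in Hab.
  destruct (edge_data n A u i Hn HD Hc Hu Hi) as [s1 [Hs1 [Ex Hdx]]]. fold k in Ex, Hdx.
  destruct (edge_data n A u k Hn HD Hc Hu Hk) as [s2 [Hs2 [Ey Hdy]]]. fold q in Ey, Hdy.
  assert (Sx : on_S1 (u i)) by (apply Hu; auto).
  assert (Sy : on_S1 (u k)) by (apply Hu; auto).
  assert (HL : forall L, is_lift (psiU (polygon n A)) L -> L = Lf n A).
  { intros L HLl. apply functional_extensionality. intros s. eapply lift_unique; [eauto| apply Lf_lift; auto]. }
  split; [|split].
  - intros v [a0 [b0 [t' [Ha [Hb [Hab0 [Hv Ht]]]]]]]. subst v.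
    assert (GH : Gf (A k) (A i) (piS1 t') >= 0 /\ Gf (A k) (A q) (piS1 t') >= 0).
    { destruct (Req_dec t' a0) as [E|E].
      - subst t'. rewrite Ha. destruct (GH_at_x (A k) (A i) (A q) (u i) s1 Hab Hs1 Ex). lra.
      - destruct (arc_interior (A k) (A i) (A q) (u i) (u k) s1 s2 a0 b0 t'); auto; lra. }
    apply psiU_at; auto; [apply piS1_on_S1| rewrite Hpk; tauto | tauto].
  - intros L HLl v t [a0 [b0 [t' [Ha [Hb [Hab0 [Hv Ht]]]]]]] Hvt.
    rewrite (HL L HLl).
    destruct (arc_interior (A k) (A i) (A q) (u i) (u k) s1 s2 a0 b0 t') as [G1 H1]; auto.
    rewrite Hv, <- Hvt in G1, H1.
    destruct (pos_near _ t (Gf_cont (A k) (A i) t) G1) as [d1 [Hd1 E1]].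
    destruct (pos_near _ t (Gf_cont (A k) (A q) t) H1) as [d2 [Hd2 E2]].
    rewrite <- Hvt, ratio_eq by (auto; apply piS1_on_S1).
    apply (derive_near (Fk (A k))); [apply Fk_derive; apply HD; auto|].
    exists (Rmin d1 d2). split; [apply Rmin_pos; lra|]. intros s Hs.
    pose proof (Rmin_l d1 d2). pose proof (Rmin_r d1 d2).
    apply Lf_at; auto; [rewrite Hpk|]; left; [apply E1|apply E2]; lra.
  - intros L HLl t Ht. rewrite (HL L HLl). split.
    + destruct (right_side (A k) (A i) (A q) s1 t Hab Hs1) as [d [Hd E]]; [rewrite Ht; auto| rewrite Ht; auto|].
      rewrite <- Ht, ratio_eq by (auto; apply piS1_on_S1).
      apply (right_derive_of (Fk (A k))); [apply Fk_derive; apply HD; auto|].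
      exists d. split; auto. intros s Hs. destruct (E s Hs).
      apply Lf_at; auto. rewrite Hpk; auto.
    + destruct (prv_facts n i Hn Hi) as [Hp [Hpi Hpk']]. fold k in Hpk'.
      assert (Hcv : cross (vsub (A k) (A i)) (vsub (A (prv n i)) (A i)) > 0) by (apply Hc; auto).
      destruct (left_side (A i) (A (prv n i)) (A k) s1 t Hcv Hs1) as [d [Hd E]]; [rewrite Ht; auto| rewrite Ht; auto|].
      rewrite <- Ht, ratio_eq by (auto; apply piS1_on_S1).
      apply (left_derive_of (Fk (A i))); [apply Fk_derive; apply HD; auto|].
      exists d. split; auto. intros s Hs. destruct (E s Hs).
      apply Lf_at; auto.
Qed.
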